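(* Let $n\ge 2$, let $g_1(s),\dots,g_n(s)$ and $f(s)$ be rational proper transfer functions, and let $L$ be a real symmetric $n\times n$ graph Laplacian with eigenvalues $0=\lambda_1(L)\le\lambda_2(L)\le\cdots\le\lambda_n(L)$. Define $$T(s)=\big(I_n+\mathrm{diag}\{g_i(s)\}f(s)L\big)^{-1}\mathrm{diag}\{g_i(s)\}=\big(\mathrm{diag}\{g_i^{-1}(s)\}+f(s)L\big)^{-1},\qquad \bar g(s)=\Big(\frac1n\sum_{i=1}^n g_i^{-1}(s)\Big)^{-1}.$$ Let $s_0\in\mathbb{C}$ be a point that is not a pole of $f(s)$, and suppose there are constants $M_1,M_2>0$ with $|\bar g(s_0)|\le M_1$ and $\max_{1\le i\le n}|g_i^{-1}(s_0)|\le M_2$. Then, whenever $|f(s_0)|\lambda_2(L)> M_2+M_1M_2^2$, $$\Big\|T(s_0)-\frac1n\bar g(s_0)\mathbf{1}\mathbf{1}^\top\Big\|\le \frac{(M_1M_2+1)^2}{|f(s_0)|\lambda_2(L)-M_2-M_1M_2^2}.$$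
   Context: $\mathbf{1}=[1,\dots,1]^\top\in\mathbb{R}^n$, $I_n$ is the $n\times n$ identity, $\|\cdot\|$ is the spectral norm, and $\mathrm{diag}\{x_i\}$ is the diagonal matrix with entries $x_i$. A (weighted, undirected) graph Laplacian $L$ is real symmetric positive semidefinite with $L\mathbf{1}=0$; $\lambda_i(L)$ denotes its $i$-th smallest eigenvalue. *)

(* Defs.v *)
From HB Require Import structures.
From mathcomp Require Import all_boot all_order all_algebra.
From mathcomp Require Import classical_sets reals.
From mathcomp Require Import complex.
Set Implicit Arguments. Unset Strict Implicit. Unset Printing Implicit Defensive.
Import Order.TTheory GRing.Theory Num.Theory.
Local Open Scope ring_scope.

Section Defs.
Variable R : realType.

Definition cabs (z : R[i]) : R := Normc.normc z.

Definition vnorm n (x : 'cV[R[i]]_n) : R :=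
  Num.sqrt (\sum_(i < n) cabs (x i 0) ^+ 2).

Definition specnorm n (A : 'M[R[i]]_n) : R :=
  sup [set vnorm (A *m x) | x in [set x : 'cV[R[i]]_n | vnorm x <= 1]].

Definition is_laplacian n (L : 'M[R]_n) : Prop :=
  [/\ L^T = L,
      (forall x : 'cV[R]_n, 0 <= (x^T *m L *m x) 0 0)
    & L *m (const_mx 1 : 'cV[R]_n) = 0].

(* A rational transfer function with real coefficients is represented by a
   numerator/denominator pair (p, q) in reduced form; it is proper when
   deg p <= deg q. *)
Definition proper_rat (p q : {poly R}) : Prop :=
  [/\ q != 0, coprimep p q & (size p <= size q)%N].

Definition polyC_R (p : {poly R}) : {poly R[i]} := map_poly (real_complex R) p.

Definition is_pole (p q : {poly R}) (s : R[i]) : Prop := (polyC_R q).[s] = 0.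

(* value of the rational function p/q at s (meaningful when s is not a pole) *)
Definition ratval (p q : {poly R}) (s : R[i]) : R[i] :=
  (polyC_R p).[s] / (polyC_R q).[s].

End Defs.

(* Main.v *)
Require Import Defs.
From HB Require Import structures.
From mathcomp Require Import all_boot all_order all_algebra.
From mathcomp Require Import classical_sets reals.
From mathcomp Require Import complex.
From mathcomp Require Import spectral sesquilinear.
From mathcomp Require Import ring lra.
Set Implicit Arguments. Unset Strict Implicit. Unset Printing Implicit Defensive.
Import Order.TTheory GRing.Theory Num.Theory.
Local Open Scope ring_scope.

Section Aux.
Variable R : realType.
Local Notation C := (R[i]).

Lemma cabs_normC (z : C) : `|z| = ((cabs z)%:C)%C.
Proof. rewrite normc_def. by case: z. Qed.

Lemma cabs_ge0 (z : C) : 0 <= cabs z.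
Proof. case: z => a b; exact: sqrtr_ge0. Qed.

Lemma cabsM (x y : C) : cabs (x * y) = cabs x * cabs y.
Proof. exact: ComplexField.Normc.normcM. Qed.

Lemma cabsD (x y : C) : cabs (x + y) <= cabs x + cabs y.
Proof. exact: (@le_normcD R x y). Qed.

Lemma cabs0 : cabs (0 : C) = 0.
Proof. exact: ComplexField.Normc.normc0. Qed.

Lemma cabs1 : cabs (1 : C) = 1.
Proof. exact: ComplexField.Normc.normc1. Qed.

Lemma cabs_eq0 (x : C) : cabs x = 0 -> x = 0.
Proof. exact: ComplexField.Normc.eq0_normc. Qed.

Lemma cabsN (x : C) : cabs (- x) = cabs x.
Proof. exact: (@normcN R x). Qed.

Lemma cabsV (x : C) : cabs (x^-1) = (cabs x)^-1.
Proof. exact: ComplexField.Normc.normcV. Qed.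

Lemma cabsR (x : R) : cabs ((x%:C)%C) = `|x|.
Proof. by rewrite /cabs /= expr0n /= addr0 sqrtr_sqr. Qed.

Lemma cabs_sum n (F : 'I_n -> C) : cabs (\sum_i F i) <= \sum_i cabs (F i).
Proof.
elim/big_rec2: _ => [|i y1 y2 _ IH]; first by rewrite cabs0.
by apply: le_trans (cabsD _ _) _; rewrite lerD2l.
Qed.

Lemma CS n (a b : 'I_n -> R) :
  (\sum_i a i * b i) ^+ 2 <= (\sum_i a i ^+ 2) * (\sum_i b i ^+ 2).
Proof.
set A := \sum_i a i ^+ 2; set B := \sum_i a i * b i; set D := \sum_i b i ^+ 2.
have A0 : 0 <= A by apply: sumr_ge0 => i _; exact: sqr_ge0.
have D0 : 0 <= D by apply: sumr_ge0 => i _; exact: sqr_ge0.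
have key t : 0 <= t ^+ 2 * A - 2 * t * B + D.
  have -> : t ^+ 2 * A - 2 * t * B + D = \sum_i (t * a i - b i) ^+ 2.
    rewrite /A /B /D mulr_sumr mulr_sumr -sumrN -!big_split /=.
    by apply: eq_bigr => i _; ring.
  by apply: sumr_ge0 => i _; exact: sqr_ge0.
have [A00|Apos] := eqVneq A 0.
  have ha : forall i, a i = 0.
    move=> i; apply/eqP; rewrite -sqrf_eq0; apply/eqP.
    move/eqP: A00; rewrite psumr_eq0 => [/allP H|j _]; last exact: sqr_ge0.
    by apply/eqP; apply: H; rewrite mem_index_enum.
  rewrite /B big1 => [|i _]; last by rewrite ha mul0r.
  by rewrite expr0n /= mulr_ge0.
have Ap : 0 < A by rewrite lt_def Apos A0.
have := key (B / A).
have -> : (B / A) ^+ 2 * A - 2 * (B / A) * B + D = D - B ^+ 2 / A.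
  by field.
rewrite subr_ge0 ler_pdivrMr // => H; by rewrite mulrC.
Qed.

Lemma CS_sqrt n (a b : 'I_n -> R) :
  \sum_i a i * b i <= Num.sqrt (\sum_i a i ^+ 2) * Num.sqrt (\sum_i b i ^+ 2).
Proof.
rewrite -sqrtrM; last by apply: sumr_ge0 => i _; exact: sqr_ge0.
apply: le_trans (ler_norm _) _.
rewrite -sqrtr_sqr; rewrite ler_sqrt ?CS //.
by apply: mulr_ge0; apply: sumr_ge0 => i _; exact: sqr_ge0.
Qed.


Definition ss n (x : 'cV[C]_n) := \sum_i cabs (x i 0) ^+ 2.

Lemma vnormE n (x : 'cV[C]_n) : vnorm x = Num.sqrt (ss x).
Proof. by []. Qed.

Lemma ss_ge0 n (x : 'cV[C]_n) : 0 <= ss x.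
Proof. by apply: sumr_ge0 => i _; exact: sqr_ge0. Qed.

Lemma vnorm_ge0 n (x : 'cV[C]_n) : 0 <= vnorm x.
Proof. exact: sqrtr_ge0. Qed.

Lemma sqr_vnorm n (x : 'cV[C]_n) : vnorm x ^+ 2 = ss x.
Proof. by rewrite vnormE sqr_sqrtr // ss_ge0. Qed.

Lemma vnormZ n (c : C) (x : 'cV[C]_n) : vnorm (c *: x) = cabs c * vnorm x.
Proof.
rewrite !vnormE.
have -> : ss (c *: x) = cabs c ^+ 2 * ss x.
  rewrite /ss mulr_sumr; apply: eq_bigr => i _; by rewrite mxE cabsM exprMn.
by rewrite sqrtrM ?sqr_ge0 // sqrtr_sqr ger0_norm // cabs_ge0.
Qed.

Lemma vnormD n (x y : 'cV[C]_n) : vnorm (x + y) <= vnorm x + vnorm y.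
Proof.
have h1 : ss (x + y) <= (vnorm x + vnorm y) ^+ 2.
  apply: (@le_trans _ _ (\sum_i (cabs (x i 0) + cabs (y i 0)) ^+ 2)).
    apply: ler_sum => i _; rewrite mxE.
    by rewrite ler_pXn2r ?nnegrE ?cabs_ge0 ?addr_ge0 ?cabs_ge0 // cabsD.
  have -> : \sum_i (cabs (x i 0) + cabs (y i 0)) ^+ 2 =
     ss x + 2 * (\sum_i cabs (x i 0) * cabs (y i 0)) + ss y.
    rewrite /ss mulr_sumr -!big_split /=; apply: eq_bigr => i _; ring.
  have := CS_sqrt (fun i => cabs (x i 0)) (fun i => cabs (y i 0)).
  rewrite -!/(vnorm _) => h.
  rewrite sqrrD !sqr_vnorm; lra.
rewrite vnormE -(ger0_norm (addr_ge0 (vnorm_ge0 x) (vnorm_ge0 y))) -sqrtr_sqr.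
by rewrite ler_sqrt // sqr_ge0.
Qed.

Lemma vnormN n (x : 'cV[C]_n) : vnorm (- x) = vnorm x.
Proof. by rewrite -scaleN1r vnormZ cabsN cabs1 mul1r. Qed.

Lemma vnormB n (x y : 'cV[C]_n) : vnorm (x - y) <= vnorm x + vnorm y.
Proof. by rewrite -(vnormN y) vnormD. Qed.

Lemma vnorm_eq0 n (x : 'cV[C]_n) : vnorm x = 0 -> x = 0.
Proof.
move=> /eqP; rewrite vnormE sqrtr_eq0 => h.
have h0 : ss x = 0 by apply/eqP; rewrite eq_le h ss_ge0.
apply/matrixP => i j; rewrite ord1 mxE; apply: cabs_eq0.
move/eqP: h0; rewrite /ss psumr_eq0 => [/allP H|k _]; last exact: sqr_ge0.
by apply/eqP; rewrite -sqrf_eq0; apply: H; rewrite mem_index_enum.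
Qed.

Lemma cabs_sum_le n (x : 'cV[C]_n) :
  cabs (\sum_i x i 0) <= Num.sqrt n%:R * vnorm x.
Proof.
apply: le_trans (cabs_sum _) _.
have := CS_sqrt (fun i => 1) (fun i => cabs (x i 0)).
under eq_bigr do rewrite mul1r.
rewrite -/(vnorm _).
have -> : \sum_(i < n) (1 : R) ^+ 2 = n%:R.
  under eq_bigr do rewrite expr1n.
  by rewrite sumr_const card_ord.
done.
Qed.

Lemma vnorm_const1 n : vnorm (const_mx 1 : 'cV[C]_n) = Num.sqrt n%:R.
Proof.
rewrite vnormE /ss; congr Num.sqrt.
under eq_bigr do rewrite mxE cabs1 expr1n.
by rewrite sumr_const card_ord.
Qed.

Lemma vnorm_diag n (d : 'I_n -> C) (M : R) (x : 'cV[C]_n) :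
  0 <= M -> (forall i, cabs (d i) <= M) ->
  vnorm (diag_mx (\row_i d i) *m x) <= M * vnorm x.
Proof.
move=> M0 hd.
have h : ss (diag_mx (\row_i d i) *m x) <= (M * vnorm x) ^+ 2.
  rewrite exprMn sqr_vnorm /ss mulr_sumr; apply: ler_sum => i _.
  rewrite mul_diag_mx !mxE cabsM exprMn ler_wpM2r ?sqr_ge0 //.
  by rewrite ler_pXn2r ?nnegrE ?cabs_ge0.
rewrite vnormE -(ger0_norm (mulr_ge0 M0 (vnorm_ge0 x))) -sqrtr_sqr.
by rewrite ler_sqrt // sqr_ge0.
Qed.

Lemma cabs_dsum n (d : 'I_n -> C) (M : R) (x : 'cV[C]_n) :
  0 <= M -> (forall i, cabs (d i) <= M) ->
  cabs (\sum_i d i * x i 0) <= M * (Num.sqrt n%:R * vnorm x).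
Proof.
move=> M0 hd.
have -> : \sum_i d i * x i 0 = \sum_i (diag_mx (\row_i d i) *m x) i 0.
  by apply: eq_bigr => i _; rewrite mul_diag_mx !mxE.
apply: le_trans (cabs_sum_le _) _.
rewrite mulrCA ler_wpM2l ?sqrtr_ge0 //.
exact: vnorm_diag.
Qed.


Section Spec.
Local Open Scope sesquilinear_scope.

Lemma ssC n (y : 'cV[C]_n) : ((ss y)%:C)%C = (y ^t* *m y) 0 0.
Proof.
rewrite /ss rmorph_sum mxE; apply: eq_bigr => i _.
by rewrite rmorphXn /= -cabs_normC sqr_normc !mxE mulrC.
Qed.

Lemma ss_unitary n (P : 'M[C]_n) (x : 'cV[C]_n) :
  P ^t* *m P = 1%:M -> ss (P *m x) = ss x.
Proof.
move=> hP; apply: (@complexI R); rewrite !ssC.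
by rewrite trmx_mul map_mxM mulmxA -(mulmxA _ (P ^t*)) hP mulmx1.
Qed.

Lemma char_poly_conj n (P D : 'M[C]_n) : P \in unitmx ->
  char_poly (invmx P *m D *m P) = char_poly D.
Proof.
move=> Pu; rewrite /char_poly /char_poly_mx.
have hX : map_mx (@polyC C) (invmx P) *m 'X%:M *m map_mx (@polyC C) P = 'X%:M.
  rewrite mul_mx_scalar -scalemxAl -map_mxM mulVmx // map_mx1.
  by rewrite scalemx1.
set A := map_mx (@polyC C) (invmx P); set B := map_mx (@polyC C) P.
have -> : 'X%:M - map_mx (@polyC C) (invmx P *m D *m P) =
          A *m ('X%:M - map_mx (@polyC C) D) *m B.
  by rewrite mulmxBr mulmxBl hX !map_mxM.
rewrite !det_mulmx mulrC mulrA -det_mulmx /A /B -map_mxM mulmxV //.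
by rewrite map_mx1 det1 mul1r.
Qed.

Lemma conjc_realR (x : R) : Num.conj ((x%:C)%C : C) = (x%:C)%C.
Proof. exact: conjc_real. Qed.


Lemma count_small (lam : seq R) : sorted <=%R lam -> 0 < lam`_1 ->
  (count (fun x : R => (`|x| < lam`_1)%R) lam <= 1)%N.
Proof.
case: lam => [|a [|b rest]] /=; [by rewrite ltxx | by rewrite ltxx |].
move=> Hs Hl.
have nb : ~~ (`|b| < b) by rewrite -leNgt ler_norm.
rewrite (negPf nb) add0n.
have Hall : all (fun y => b <= y) rest.
  by apply: order_path_min; [exact: le_trans | case/andP: Hs].
have -> : count (fun x : R => `|x| < b) rest = 0%N.
  apply/eqP; rewrite -leqn0 leqNgt -has_count; apply/hasPn => y yr /=.
  rewrite -leNgt; apply: le_trans (ler_norm _).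
  by move/allP: Hall => /(_ y yr).
by case: (_ < _).
Qed.

Lemma Lbound n (L : 'M[R]_n) (lam : seq R) :
  is_laplacian L -> sorted <=%R lam ->
  char_poly L = \prod_(x <- lam) ('X - x%:P) -> 0 < lam`_1 ->
  forall w : 'cV[C]_n, \sum_i w i 0 = 0 ->
  lam`_1 * vnorm w <= vnorm (map_mx (real_complex R) L *m w).
Proof.
move=> [LT Lpsd L1] Hs Hc Hl w Hw.
set Lc := map_mx (real_complex R) L.
have LcT : Lc ^t* = Lc.
  apply/matrixP => i j; rewrite !mxE conjc_realR; congr (_%:C)%C.
  by rewrite -[in RHS]LT mxE.
have Lnorm : Lc \is normalmx by apply/normalmxP; rewrite LcT.
have /orthomx_spectralP := Lnorm.
set P := spectralmx Lc; set s := spectral_diag Lc => HLc.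
have Pu : P \is unitarymx := spectral_unitarymx Lc.
have PPt : P *m P ^t* = 1%:M := unitarymxP Pu.
have PtP : P ^t* *m P = 1%:M := mulmx1C PPt.
have cpD : char_poly Lc = char_poly (diag_mx s).
  by rewrite {1}HLc char_poly_conj // unitarymx_unit.
have iP : invmx P = P ^t* := invmx_unitary Pu.
rewrite iP in HLc.
have Hperm : perm_eq [seq s 0 i | i <- index_enum 'I_n] [seq (x%:C)%C | x <- lam].
  apply: prod_XsubC_eq; rewrite !big_map.
  transitivity (char_poly (diag_mx s)).
    rewrite char_poly_trig ?diag_mx_is_trig //.
    by apply: eq_bigr => i _; rewrite mxE eqxx mulr1n.
  by rewrite -cpD /Lc -map_char_poly Hc map_prod_XsubC.
pose bad := fun c : C => cabs c < lam`_1.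
have Hcount : (count bad [seq s 0%R i | i <- index_enum 'I_n] <= 1)%N.
  move/permP: Hperm => ->; rewrite count_map.
  rewrite (eq_count (a2 := fun x : R => `|x| < lam`_1)); last first.
    by move=> x /=; rewrite /bad cabsR.
  exact: count_small.
have Huniq : forall i j : 'I_n, bad (s 0 i) -> bad (s 0 j) -> i = j.
  move=> i j bi bj; apply/eqP; apply/negP => /negP nij.
  move: Hcount; rewrite count_map -sum1_count (bigD1 i) //= (bigD1 j) /=; last first.
    by rewrite bj eq_sym.
  by [].
set u := P *m (const_mx 1 : 'cV[C]_n).
have Lc1 : Lc *m (const_mx 1 : 'cV[C]_n) = 0.
  have : map_mx (real_complex R) (L *m (const_mx 1 : 'cV[R]_n)) = 0 by rewrite L1 map_mx0.
  by rewrite map_mxM map_const_mx rmorph1.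
have Du : diag_mx s *m u = 0.
  have := congr1 (mulmx P) Lc1.
  by rewrite mulmx0 {1}HLc !mulmxA PPt mul1mx -mulmxA.
have us : forall j, s 0 j * u j 0 = 0.
  by move=> j; move/matrixP: Du => /(_ j 0); rewrite mul_diag_mx !mxE.
have good_u : forall j, ~~ bad (s 0 j) -> u j 0 = 0.
  move=> j gj; have := us j; move/eqP; rewrite mulf_eq0 => /orP [/eqP sj0|/eqP //].
  by move: gj; rewrite /bad sj0 cabs0 Hl.
set z := P *m w.
have uz : \sum_j Num.conj (u j 0) * z j 0 = 0.
  have : u ^t* *m z = (const_mx 1 : 'cV[C]_n) ^t* *m w.
    by rewrite /u /z trmx_mul map_mxM mulmxA -(mulmxA _ (P ^t*)) PtP mulmx1.
  move/matrixP => /(_ 0 0); rewrite !mxE.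
  rewrite (eq_bigr (fun j => Num.conj (u j 0) * z j 0)); last by move=> j _; rewrite !mxE.
  move=> ->; rewrite -[RHS]Hw; apply: eq_bigr => j _.
  by rewrite !mxE rmorph1 mul1r.
have zbad : forall i, bad (s 0 i) -> z i 0 = 0.
  move=> i bi.
  have others : forall j, j != i -> u j 0 = 0.
    move=> j ji; apply: good_u; apply/negP => bj.
    by move/eqP: ji; apply; apply: Huniq.
  have : Num.conj (u i 0) * z i 0 = 0.
    rewrite -uz (bigD1 i) //= big1 ?addr0 // => j ji.
    by rewrite others // rmorph0 mul0r.
  move/eqP; rewrite mulf_eq0 conjC_eq0 => /orP [/eqP ui0|/eqP //].
  have u0 : u = 0.
    apply/matrixP => j k; rewrite ord1 [RHS]mxE.
    by have [->|/others ->] := eqVneq j i.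
  have : P ^t* *m u = const_mx 1 by rewrite /u mulmxA PtP mul1mx.
  rewrite u0 mulmx0 => /matrixP /(_ i 0); rewrite !mxE => /eqP.
  by rewrite eq_sym oner_eq0.
have ssL : ss (Lc *m w) = \sum_i cabs (s 0 i) ^+ 2 * cabs (z i 0) ^+ 2.
  have -> : Lc *m w = P ^t* *m (diag_mx s *m z).
    by rewrite HLc /z !mulmxA.
  rewrite ss_unitary; last by rewrite trmxCK.
  by apply: eq_bigr => i _; rewrite mul_diag_mx mxE cabsM exprMn.
have ssw : ss w = ss z by rewrite /z ss_unitary.
have key : lam`_1 ^+ 2 * ss w <= ss (Lc *m w).
  rewrite ssL ssw /ss mulr_sumr; apply: ler_sum => i _.
  have [bi|gi] := boolP (bad (s 0 i)).
    by rewrite zbad // cabs0 expr0n /= !mulr0.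
  rewrite ler_wpM2r ?sqr_ge0 // ler_pXn2r ?nnegrE ?cabs_ge0 ?(ltW Hl) //.
  by rewrite leNgt.
rewrite vnormE vnormE -(ger0_norm (ltW Hl)) -sqrtr_sqr -sqrtrM ?sqr_ge0 //.
by rewrite ler_sqrt // ss_ge0.
Qed.

End Spec.

End Aux.

Section Main.
Variable R : realType.
Local Notation C := (R[i]).

Lemma colsum n (L : 'M[R]_n) : is_laplacian L ->
  forall x : 'cV[C]_n, \sum_i (map_mx (real_complex R) L *m x) i 0 = 0.
Proof.
move=> [LT _ L1] x.
rewrite (eq_bigr (fun i => \sum_j ((L i j)%:C)%C * x j 0)); last first.
  by move=> i _; rewrite mxE; apply: eq_bigr => j _; rewrite mxE.
rewrite exchange_big /=; apply: big1 => j _.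
rewrite -mulr_suml -rmorph_sum.
have -> : \sum_i L i j = 0.
  have : (L *m (const_mx 1 : 'cV[R]_n)) j 0 = 0 by rewrite L1 mxE.
  rewrite mxE => h; apply: (eq_trans _ h); apply: eq_bigr => i _.
  by rewrite mxE mulr1 -{1}LT mxE.
by rewrite rmorph0 mul0r.
Qed.

Lemma vnorm0 n : vnorm (0 : 'cV[C]_n) = 0.
Proof.
rewrite vnormE /ss big1 => [|i _]; first exact: sqrtr0.
by rewrite mxE cabs0 expr2 mul0r.
Qed.

Lemma Jmul n (y : 'cV[C]_n) :
  (const_mx 1 : 'M[C]_n) *m y = (\sum_j y j 0) *: const_mx 1.
Proof.
apply/matrixP => i k; rewrite ord1 !mxE mulr1; apply: eq_bigr => j _.
by rewrite mxE mul1r.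
Qed.

Lemma cabs_natV n : (0 < n)%N -> cabs ((n%:R : C)^-1) = (n%:R : R)^-1.
Proof.
move=> n0; rewrite cabsV.
have -> : (n%:R : C) = ((n%:R : R)%:C)%C by rewrite rmorph_nat.
by rewrite cabsR ger0_norm ?ler0n.
Qed.


Lemma arith1 (a b c1 e vy : R) : a <= vy + b + c1 + e -> a - b - e <= vy + c1.
Proof. move=> h; lra. Qed.

Lemma core n (hn : (2 <= n)%N) (d : 'I_n -> C) (phi : C) (L : 'M[R]_n)
  (HL : is_laplacian L) (lam : seq R) (Hsort : sorted <=%R lam)
  (Hchar : char_poly L = \prod_(x <- lam) ('X - x%:P))
  (M1 M2 : R) (HM1 : 0 < M1) (HM2 : 0 < M2)
  (Hh : (n%:R^-1 * \sum_i d i) != 0)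
  (Hgbar : cabs ((n%:R^-1 * \sum_i d i)^-1) <= M1)
  (Hmax : forall i, cabs (d i) <= M2)
  (Hgap : M2 + M1 * M2 ^+ 2 < cabs phi * lam`_1) :
  forall x : 'cV[C]_n,
  vnorm (x - (n%:R^-1 * (n%:R^-1 * \sum_i d i)^-1) *:
           ((const_mx 1 : 'M[C]_n) *m ((diag_mx (\row_i d i) + phi *: map_mx (real_complex R) L) *m x)))
  <= (M1 * M2 + 1) ^+ 2 / (cabs phi * lam`_1 - M2 - M1 * M2 ^+ 2) *
     vnorm ((diag_mx (\row_i d i) + phi *: map_mx (real_complex R) L) *m x).
Proof.
move=> x.
set A := diag_mx (\row_i d i) + phi *: map_mx (real_complex R) L.
set h := n%:R^-1 * \sum_i d i.
set gb := h^-1.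
set c := n%:R^-1 * gb.
set Lc := map_mx (real_complex R) L.
set G := cabs phi * lam`_1 - M2 - M1 * M2 ^+ 2.
have n0 : (0 < n)%N by apply: leq_trans hn.
have nC0 : (n%:R : C) != 0 by rewrite pnatr_eq0 -lt0n.
have Hl : 0 < lam`_1.
  rewrite ltNge; apply/negP => H.
  have := mulr_ge0_le0 (cabs_ge0 phi) H.
  have : 0 < M2 + M1 * M2 ^+ 2 by rewrite addr_gt0 // mulr_gt0 // exprn_gt0.
  lra.
have G0 : 0 < G by rewrite /G; lra.
set N := (n%:R : R).
have N0 : 0 < N by rewrite /N ltr0n.
set t := Num.sqrt N.
have t0 : 0 <= t := sqrtr_ge0 _.
have tt : t * t = N by rewrite -expr2 sqr_sqrtr // ltW.
have cabsc : cabs c <= N^-1 * M1.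
  rewrite /c cabsM cabs_natV // ler_wpM2l // invr_ge0 ltW //.
set y := A *m x.
set al := n%:R^-1 * \sum_i x i 0.
set w := x - al *: (const_mx 1 : 'cV[C]_n).
have Hw : \sum_i w i 0 = 0.
  rewrite /w (eq_bigr (fun i => x i 0 - al)); last by move=> i _; rewrite !mxE mulr1.
  rewrite sumrB sumr_const card_ord /al -mulrnAl -mulr_natr mulVf // mul1r.
  by rewrite subrr.
set be := \sum_i d i * w i 0.
have Lcx : Lc *m x = Lc *m w.
  have -> : x = w + al *: const_mx 1 by rewrite /w subrK.
  have Lc1 : Lc *m (const_mx 1 : 'cV[C]_n) = 0.
    case: HL => _ _ L1.
    have : map_mx (real_complex R) (L *m (const_mx 1 : 'cV[R]_n)) = 0 by rewrite L1 map_mx0.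
    by rewrite map_mxM map_const_mx rmorph1.
  by rewrite mulmxDr -scalemxAr Lc1 scaler0 addr0.
have Sy : \sum_i y i 0 = al * (n%:R * h) + be.
  have -> : \sum_i y i 0 = \sum_i d i * x i 0.
    rewrite /y /A mulmxDl (eq_bigr (fun i => d i * x i 0 + (phi *: Lc *m x) i 0)); last first.
      by move=> i _; rewrite mxE mul_diag_mx !mxE.
    rewrite big_split /= -[RHS]addr0; congr (_ + _).
    rewrite -scalemxAl (eq_bigr (fun i => phi * (Lc *m x) i 0)); last by move=> i _; rewrite mxE.
    by rewrite -mulr_sumr colsum // mulr0.
  have -> : \sum_i d i * x i 0 = \sum_i (d i * w i 0 + al * d i).
    apply: eq_bigr => i _; rewrite /w !mxE mulr1; ring.
  rewrite big_split /= -mulr_sumr /h [n%:R * _]mulrA mulfV // mul1r addrC.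
  by [].
have hgb : gb * h = 1 by rewrite /gb mulVf.
have e1 : x - c *: ((const_mx 1 : 'M[C]_n) *m y) = w - (c * be) *: const_mx 1.
  rewrite Jmul Sy.
  rewrite scalerA.
  have -> : c * (al * (n%:R * h) + be) = al + c * be.
    rewrite /c /gb; field; by rewrite nC0 Hh.
  by rewrite scalerDl opprD addrA /w.
have vw0 := vnorm_ge0 w.
have vy0 := vnorm_ge0 y.
have NN : N^-1 * (t * t) = 1 by rewrite tt mulVf // gt_eqF.
have iN0 : 0 <= N^-1 by rewrite invr_ge0 ltW.
have bb : cabs be <= M2 * (t * vnorm w) := cabs_dsum w (ltW HM2) Hmax.
have B1 : vnorm (x - c *: ((const_mx 1 : 'M[C]_n) *m y)) <= (1 + M1 * M2) * vnorm w.
  rewrite e1; apply: le_trans (vnormB _ _) _; rewrite vnormZ vnorm_const1 -/t cabsM.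
  have : cabs c * cabs be * t <= N^-1 * M1 * (M2 * (t * vnorm w)) * t.
    rewrite ler_wpM2r // ler_pM ?cabs_ge0 //.
  have -> : N^-1 * M1 * (M2 * (t * vnorm w)) * t = M1 * M2 * vnorm w * (N^-1 * (t * t)).
    ring.
  rewrite NN mulr1 => h1; lra.
have al_eq : al = c * (\sum_i y i 0 - be).
  rewrite Sy /c /gb; field; by rewrite nC0 Hh.
have cabs_al : cabs al <= N^-1 * M1 * (t * vnorm y + M2 * (t * vnorm w)).
  rewrite al_eq cabsM; apply: ler_pM; rewrite ?cabs_ge0 //.
  apply: le_trans (cabsD _ _) _; rewrite cabsN; apply: lerD => //.
  exact: cabs_sum_le.
have D1 : vnorm (diag_mx (\row_i d i) *m (const_mx 1 : 'cV[C]_n)) <= M2 * t.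
  apply: le_trans (vnorm_diag _ (ltW HM2) Hmax) _.
  by rewrite vnorm_const1.
have eqLw : phi *: (Lc *m w) =
    y - (diag_mx (\row_i d i) *m w + al *: (diag_mx (\row_i d i) *m (const_mx 1 : 'cV[C]_n))).
  rewrite /y /A mulmxDl -scalemxAl Lcx.
  have -> : diag_mx (\row_i d i) *m x =
      diag_mx (\row_i d i) *m w + al *: (diag_mx (\row_i d i) *m (const_mx 1 : 'cV[C]_n)).
    by rewrite scalemxAr -mulmxDr /w subrK.
  by rewrite addrC addKr.
have Lbd : lam`_1 * vnorm w <= vnorm (Lc *m w) := Lbound HL Hsort Hchar Hl Hw.
have B2 : cabs phi * (lam`_1 * vnorm w) <=
    vnorm y + (M2 * vnorm w + N^-1 * M1 * (t * vnorm y + M2 * (t * vnorm w)) * (M2 * t)).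
  apply: le_trans (ler_wpM2l (cabs_ge0 phi) Lbd) _.
  rewrite -vnormZ eqLw; apply: le_trans (vnormB _ _) _; rewrite lerD2l.
  apply: le_trans (vnormD _ _) _; apply: lerD.
    by apply: vnorm_diag => //; exact: ltW.
  rewrite vnormZ; apply: ler_pM; rewrite ?cabs_ge0 ?vnorm_ge0 //.
have E : N^-1 * M1 * (t * vnorm y + M2 * (t * vnorm w)) * (M2 * t) =
    M1 * M2 * (vnorm y + M2 * vnorm w) * (N^-1 * (t * t)) by ring.
rewrite E NN mulr1 in B2.
have W : vnorm w <= (1 + M1 * M2) / G * vnorm y.
  rewrite mulrAC ler_pdivlMr //.
  have E1 : vnorm w * G = cabs phi * (lam`_1 * vnorm w) - M2 * vnorm w - M1 * M2 ^+ 2 * vnorm w.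
    by rewrite /G; ring.
  have E2 : vnorm y + (M2 * vnorm w + M1 * M2 * (vnorm y + M2 * vnorm w)) =
     vnorm y + M2 * vnorm w + M1 * M2 * vnorm y + M1 * M2 ^+ 2 * vnorm w by ring.
  have E3 : (1 + M1 * M2) * vnorm y = vnorm y + M1 * M2 * vnorm y by ring.
  rewrite E1 E3; rewrite E2 in B2.
  exact: arith1.
apply: le_trans B1 _.
apply: le_trans (ler_wpM2l _ W) _.
  by rewrite addr_ge0 // mulr_ge0 // ltW.
rewrite mulrA; apply: ler_wpM2r => //.
by rewrite mulrA -expr2 addrC.
Qed.


End Main.

Section Main.
Variable R : realType.
Local Notation C := (R[i]).
Lemma main_gen n (hn : (2 <= n)%N) (d : 'I_n -> C) (phi : C) (L : 'M[R]_n)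
  (HL : is_laplacian L) (lam : seq R) (Hsort : sorted <=%R lam)
  (Hchar : char_poly L = \prod_(x <- lam) ('X - x%:P))
  (M1 M2 : R) (HM1 : 0 < M1) (HM2 : 0 < M2)
  (Hh : (n%:R^-1 * \sum_i d i) != 0)
  (Hgbar : cabs ((n%:R^-1 * \sum_i d i)^-1) <= M1)
  (Hmax : forall i, cabs (d i) <= M2)
  (Hgap : M2 + M1 * M2 ^+ 2 < cabs phi * lam`_1) :
  (diag_mx (\row_i d i) + phi *: map_mx (real_complex R) L) \in unitmx /\
  specnorm (invmx (diag_mx (\row_i d i) + phi *: map_mx (real_complex R) L)
            - (n%:R^-1 * (n%:R^-1 * \sum_i d i)^-1) *: const_mx 1)
    <= (M1 * M2 + 1) ^+ 2 / (cabs phi * lam`_1 - M2 - M1 * M2 ^+ 2).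
Proof.
have Hc := core hn HL Hsort Hchar HM1 HM2 Hh Hgbar Hmax Hgap.
set A := diag_mx (\row_i d i) + phi *: map_mx (real_complex R) L in Hc *.
set c := n%:R^-1 * (n%:R^-1 * \sum_i d i)^-1 in Hc *.
set K := (M1 * M2 + 1) ^+ 2 / (cabs phi * lam`_1 - M2 - M1 * M2 ^+ 2) in Hc *.
have AT : A^T = A.
  case: HL => LT _ _.
  by rewrite /A linearD /= linearZ /= tr_diag_mx map_trmx LT.
have Aunit : A \in unitmx.
  rewrite unitmxE unitfE; apply/negP => /det0P [v v0 vA].
  have Av : A *m v^T = 0 by rewrite -{1}AT -trmx_mul vA trmx0.
  have := Hc v^T; rewrite Av mulmx0 scaler0 subr0 vnorm0 mulr0 => h.
  have : vnorm v^T = 0 by apply/eqP; rewrite eq_le h vnorm_ge0.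
  move/vnorm_eq0/(congr1 trmx); rewrite trmxK trmx0 => v0'.
  by rewrite v0' eqxx in v0.
split => //.
have G0 : 0 < cabs phi * lam`_1 - M2 - M1 * M2 ^+ 2.
  move: Hgap; clear; move=> h; lra.
have K0 : 0 <= K by rewrite /K divr_ge0 ?sqr_ge0 // ltW.
apply: ge_sup.
  exists (vnorm ((invmx A - c *: const_mx 1) *m 0)); exists 0 => //=.
  by rewrite vnorm0 ler01.
move=> r [z hz <-].
set x := invmx A *m z.
have Ax : A *m x = z by rewrite /x mulKVmx.
have -> : (invmx A - c *: const_mx 1) *m z = x - c *: (const_mx 1 *m (A *m x)).
  by rewrite Ax mulmxBl -scalemxAl.
apply: le_trans (Hc x) _; rewrite Ax.
by rewrite -[X in _ <= X]mulr1 ler_wpM2l.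
Qed.

End Main.

Unset Implicit Arguments. Set Strict Implicit.

Theorem lemma1 (R : realType) (n : nat) (hn : (2 <= n)%N)
  (gp gq : 'I_n -> {poly R}) (fp fq : {poly R})
  (Hg : forall i, proper_rat (gp i) (gq i)) (Hf : proper_rat fp fq)
  (L : 'M[R]_n) (HL : is_laplacian L)
  (lam : seq R) (Hsort : sorted <=%R lam)
  (Hchar : char_poly L = \prod_(x <- lam) ('X - x%:P))
  (s0 : R[i]) (Hf0 : ~ is_pole fp fq s0)
  (Hginv : forall i, ~ is_pole (gq i) (gp i) s0)
  (Hh : (n%:R^-1 * \sum_(i < n) ratval (gq i) (gp i) s0) != 0)
  (M1 M2 : R) (HM1 : 0 < M1) (HM2 : 0 < M2)
  (Hgbar : cabs ((n%:R^-1 * \sum_(i < n) ratval (gq i) (gp i) s0)^-1) <= M1)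
  (Hmax : forall i, cabs (ratval (gq i) (gp i) s0) <= M2)
  (Hgap : M2 + M1 * M2 ^+ 2 < cabs (ratval fp fq s0) * lam`_1) :
  let gbar0 := (n%:R^-1 * \sum_(i < n) ratval (gq i) (gp i) s0)^-1 in
  let Minv := diag_mx (\row_i ratval (gq i) (gp i) s0)
              + ratval fp fq s0 *: map_mx (real_complex R) L in
  Minv \in unitmx /\
  specnorm (invmx Minv - (n%:R^-1 * gbar0) *: const_mx 1)
    <= (M1 * M2 + 1) ^+ 2
       / (cabs (ratval fp fq s0) * lam`_1 - M2 - M1 * M2 ^+ 2).
Proof.
move=> gbar0 Minv.
exact: (@main_gen R n hn (fun i => ratval (gq i) (gp i) s0) (ratval fp fq s0) L HL lam
  Hsort Hchar M1 M2 HM1 HM2 Hh Hgbar Hmax Hgap).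
Qed.
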